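(* Let $N\ge1$, $K\ge1$, $n_v\ge0$, let $\mathbf{T}\in[0,1]^{K\times K}$ be row-stochastic, and let $\mathbf{P}\in[0,1]^{K^N\times K^N}$ be the global transition matrix given by $\mathbf{P}(x,y)=\prod_{n=1}^N \frac{1}{|V_n|}\sum_{i\in V_n}\mathbf{T}_{x_i,y_n}$ for $x,y\in[K]^N$. Then $\mathbf{P}$ is irreducible and aperiodic if and only if $\mathbf{T}$ is irreducible and aperiodic.
   Context: Vertices $[N]=\{1,\dots,N\}$ are arranged on a cycle; for $n\in[N]$, $V_n\subset[N]$ is the set of residues modulo $N$ of $n-n_v,\dots,n+n_v$ (so $n\in V_n$), and $|V_n|$ its cardinality. $\mathbf{P}$ is the transition matrix of the probabilistic cellular automaton with local transition matrix $\mathbf{T}$. *)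

(* Defs.v *)
From HB Require Import structures.
From mathcomp Require Import all_boot all_order all_algebra.
Set Implicit Arguments. Unset Strict Implicit. Unset Printing Implicit Defensive.
Import Order.TTheory GRing.Theory Num.Theory.
Local Open Scope ring_scope.

Section FinMx.
Variables (R : realFieldType) (S : finType).

Fixpoint mpow (M : S -> S -> R) (m : nat) : S -> S -> R :=
  match m with
  | 0 => fun i j => (i == j)%:R
  | m'.+1 => fun i j => \sum_(k : S) mpow M m' i k * M k j
  end.

Definition row_stochastic (M : S -> S -> R) : Prop :=
  (forall i j, 0 <= M i j <= 1) /\ (forall i, \sum_(j : S) M i j = 1).

Definition irreducible (M : S -> S -> R) : Prop :=
  forall i j, exists m : nat, 0 < mpow M m i j.

(* aperiodic: every state has period 1, i.e. the gcd of
   {m >= 1 : M^m(i,i) > 0} equals 1 (the only common divisor is 1). *)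
Definition aperiodic (M : S -> S -> R) : Prop :=
  forall i, forall d : nat,
    (forall m : nat, (0 < m)%N -> 0 < mpow M m i i -> (d %| m)%N) -> d = 1%N.
End FinMx.

(* Neighbourhood V_n on the cycle 'I_N (vertices 0..N-1 stand for 1..N):
   residues mod N of n - nv, ..., n + nv.  Since (N-1)*nv = -nv mod N,
   n - nv + j is written n + j + (N-1)*nv to avoid truncated subtraction. *)
Definition nbhd (N nv : nat) (n : 'I_N) : {set 'I_N} :=
  [set i : 'I_N | [exists j : 'I_(2 * nv).+1,
                    (i : nat) == ((n + j + N.-1 * nv) %% N)%N]].

Arguments nbhd : clear implicits.
Definition pca (R : realFieldType) (N K nv : nat) (T : 'I_K -> 'I_K -> R)
  (x y : {ffun 'I_N -> 'I_K}) : R :=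
  \prod_(n : 'I_N)
     ((#|nbhd N nv n|%:R)^-1 * \sum_(i in nbhd N nv n) T (x i) (y n)).
Arguments pca {R} N {K} nv T x y.

(* Main.v *)
Require Import Defs.
From HB Require Import structures.
From mathcomp Require Import all_boot all_order all_algebra.
From mathcomp Require Import zify ring lra.
From Stdlib Require Import Classical.
Set Implicit Arguments. Unset Strict Implicit. Unset Printing Implicit Defensive.
Import Order.TTheory GRing.Theory Num.Theory.
Local Open Scope ring_scope.

Section Aux.
Variable R : realFieldType.

Lemma sum_pos_ex (I : finType) (P : pred I) (F : I -> R) :
  (forall k, P k -> 0 <= F k) -> 0 < \sum_(k | P k) F k ->
  exists k, P k /\ 0 < F k.
Proof.
move=> H0 Hs.
case: (boolP [exists k, P k && (0 < F k)]) => [/existsP [k /andP [Pk Fk]]|Hn].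
  by exists k.
have Hz : \sum_(k | P k) F k = 0.
  apply: big1 => k Pk; apply/le_anti; rewrite H0 // andbT.
  move/existsPn: Hn => /(_ k); rewrite Pk /=; by rewrite leNgt.
by rewrite Hz ltxx in Hs.
Qed.

Lemma sum_gt0_term (I : finType) (P : pred I) (F : I -> R) k0 :
  (forall k, P k -> 0 <= F k) -> P k0 -> 0 < F k0 -> 0 < \sum_(k | P k) F k.
Proof.
move=> H0 Pk Fk; rewrite (bigD1 k0) //=.
have : 0 <= \sum_(k | P k && (k != k0)) F k.
  by apply: sumr_ge0 => k /andP [/H0].
lra.
Qed.

Lemma mul_pos_split (a b : R) : 0 <= a -> 0 <= b -> 0 < a * b -> 0 < a /\ 0 < b.
Proof.
move=> ha hb; rewrite lt_def mulf_eq0 negb_or => /andP [/andP [na nb] _].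
by rewrite !lt_def na nb ha hb.
Qed.

Variable S : finType.
Variable M : S -> S -> R.
Hypothesis M0 : forall i j, 0 <= M i j.

Lemma mpow_ge0 m i j : 0 <= mpow M m i j.
Proof.
elim: m i j => [|m IH] i j /=; first by rewrite ler0n.
by apply: sumr_ge0 => k _; apply: mulr_ge0.
Qed.

Lemma mpowS_pos_ex m i j : 0 < mpow M m.+1 i j ->
  exists k, 0 < mpow M m i k /\ 0 < M k j.
Proof.
move=> /= H.
have [k [_ Hk]] := sum_pos_ex (fun k _ => mulr_ge0 (mpow_ge0 m i k) (M0 k j)) H.
exists k; exact: mul_pos_split (mpow_ge0 _ _ _) (M0 _ _) Hk.
Qed.

Lemma mpowS_pos m i j k : 0 < mpow M m i k -> 0 < M k j -> 0 < mpow M m.+1 i j.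
Proof.
move=> h1 h2 /=.
apply: (@sum_gt0_term _ predT _ k) => //.
  by move=> l _; apply: mulr_ge0 (mpow_ge0 _ _ _) (M0 _ _).
exact: mulr_gt0.
Qed.

Lemma mpow0_pos i : 0 < mpow M 0 i i.
Proof. by rewrite /= eqxx ltr01. Qed.

Lemma mpow0_eq i j : 0 < mpow M 0 i j -> i = j.
Proof. by rewrite /=; case: eqP => // _; rewrite ltxx. Qed.

Lemma mpow_add_pos a b i j k :
  0 < mpow M a i j -> 0 < mpow M b j k -> 0 < mpow M (a + b) i k.
Proof.
elim: b k => [|b IH] k ha hb.
  by rewrite addn0; move/mpow0_eq: hb => <-.
rewrite addnS; have [l [h1 h2]] := mpowS_pos_ex hb.
exact: mpowS_pos (IH _ ha h1) h2.
Qed.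

Lemma mpow_mul_pos k a i : 0 < mpow M a i i -> 0 < mpow M (k * a) i i.
Proof.
move=> h; elim: k => [|k IH]; first by rewrite mul0n; apply: mpow0_pos.
by rewrite mulSn; apply: mpow_add_pos h IH.
Qed.

Lemma aper_large i : aperiodic M ->
  exists L, forall m, (L <= m)%N -> 0 < mpow M m i i.
Proof.
move=> Hap.
pose S0 m := 0 < mpow M m i i.
pose Dif d := exists b, S0 b /\ S0 (b + d)%N.
have Hpos : exists s, (0 < s)%N /\ S0 s.
  apply: NNPP => Hn.
  have : (2 = 1)%N -> False by [].
  apply; apply: (Hap i 2%N) => m m0 hm.
  by exfalso; apply: Hn; exists m.
have D1 : Dif 1%N.
  case: Hpos => s [s0 hs].
  have : forall n d, (d < n)%N -> (0 < d)%N -> Dif d -> Dif 1%N.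
    elim => [|n IHn] d // dn d0 [b [hb hbd]].
    case: (classic (forall m, (0 < m)%N -> S0 m -> (d %| m)%N)) => Hc.
      by rewrite -(Hap i d Hc); exists b.
    have [s1 Hs1] := not_all_ex_not _ _ Hc.
    have [s1p [hs1 nd]] : (0 < s1)%N /\ S0 s1 /\ ~ (d %| s1)%N.
      by split; [apply: NNPP => h; apply: Hs1 => /h|
                 split; [apply: NNPP => h; apply: Hs1 => _ /h|
                         by move=> h; apply: Hs1]].
    set q := (s1 %/ d)%N; set r := (s1 %% d)%N.
    have e : s1 = (q * d + r)%N by rewrite /q /r -divn_eq.
    have r0 : (0 < r)%N.
      rewrite lt0n; apply/negP => /eqP r0; apply: nd; rewrite /dvdn.
      by rewrite -/r r0.
    have rd : (r < d)%N by rewrite /r ltn_pmod.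
    apply: (IHn r) => //; first by lia.
    exists (q * (b + d))%N; split; first exact: mpow_mul_pos.
    have -> : (q * (b + d) + r = q * b + s1)%N by rewrite e; lia.
    apply: mpow_add_pos hs1; exact: mpow_mul_pos.
  move/(_ s.+1 s (ltnSn s) s0); apply.
  by exists 0%N; split; [exact: mpow0_pos|].
case: D1 => b [hb hb1].
case: (posnP b) => [b0|bp].
  exists 0%N => m _; rewrite -(muln1 m); apply: mpow_mul_pos.
  by move: hb1; rewrite b0.
exists (b * b)%N => m hm.
have e := divn_eq m b.
set q := (m %/ b)%N in e; set r := (m %% b)%N in e.
have rb : (r < b)%N by rewrite /r ltn_pmod.
have qb : (b <= q)%N by nia.
have -> : m = ((q - r) * b + r * (b + 1))%N by nia.
by apply: mpow_add_pos; apply: mpow_mul_pos.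
Qed.

Lemma unif (X : finType) (Q : X -> nat -> Prop) :
  (forall x, exists L, forall m, (L <= m)%N -> Q x m) ->
  exists L, forall x m, (L <= m)%N -> Q x m.
Proof.
move=> H.
have : forall s : seq X, exists L, forall x m, x \in s -> (L <= m)%N -> Q x m.
  elim => [|y s [L HL]]; first by exists 0%N.
  have [L' HL'] := H y.
  exists (maxn L L') => x m; rewrite in_cons => /orP [/eqP ->|xs] hm.
    by apply: HL'; lia.
  by apply: HL => //; lia.
case/(_ (enum X)) => L HL; exists L => x m; apply: HL; by rewrite mem_enum.
Qed.

Lemma primitive : irreducible M -> aperiodic M ->
  exists L, forall m i j, (L <= m)%N -> 0 < mpow M m i j.
Proof.
move=> Hir Hap.
have := @unif (S * S)%type (fun p m => 0 < mpow M m p.1 p.2).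
case.
  case=> i j /=.
  have [L HL] := aper_large i Hap.
  have [p Hp] := Hir i j.
  exists (L + p)%N => m hm.
  have -> : m = ((m - p) + p)%N by lia.
  apply: mpow_add_pos Hp; apply: HL; lia.
move=> L HL; exists L => m i j hm; exact: (HL (i, j) m hm).
Qed.

End Aux.

Section PCA.
Variables (R : realFieldType) (N K nv : nat).
Hypothesis hN : (1 <= N)%N.
Variable T : 'I_K -> 'I_K -> R.
Hypothesis T0 : forall i j, 0 <= T i j.

Lemma in_nbhd n : n \in nbhd N nv n.
Proof.
rewrite inE; apply/existsP.
have h : (nv < (2 * nv).+1)%N by lia.
exists (Ordinal h) => /=.
have -> : (n + nv + N.-1 * nv = nv * N + n)%N by nia.
by rewrite modnMDl modn_small.
Qed.

Lemma pca_ge0 (x y : {ffun 'I_N -> 'I_K}) : 0 <= pca N nv T x y.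
Proof.
apply: prodr_ge0 => n _; apply: mulr_ge0; first by rewrite invr_ge0 ler0n.
by apply: sumr_ge0.
Qed.

Lemma pca_pos (x y : {ffun 'I_N -> 'I_K}) : (forall n, 0 < T (x n) (y n)) -> 0 < pca N nv T x y.
Proof.
move=> H; apply: prodr_gt0 => n _; apply: mulr_gt0.
  rewrite invr_gt0 ltr0n card_gt0; apply/set0Pn; exists n; exact: in_nbhd.
apply: (sum_gt0_term (k0 := n)) => //; exact: in_nbhd.
Qed.

Lemma pca_pos_inv (x y : {ffun 'I_N -> 'I_K}) n : 0 < pca N nv T x y ->
  exists i, 0 < T (x i) (y n).
Proof.
move=> H.
have Hf : 0 < (#|nbhd N nv n|%:R)^-1 * \sum_(i in nbhd N nv n) T (x i) (y n).
  rewrite lt_def; apply/andP; split; last first.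
    by apply: mulr_ge0; [rewrite invr_ge0 ler0n| apply: sumr_ge0].
  apply/negP => /eqP h0; move: H; rewrite /pca (bigD1 n) //= h0 mul0r ltxx.
  done.
have Hc : 0 < (#|nbhd N nv n|%:R)^-1 :> R.
  rewrite invr_gt0 ltr0n card_gt0; apply/set0Pn; exists n; exact: in_nbhd.
rewrite pmulr_rgt0 // in Hf.
have [i [_ Hi]] := sum_pos_ex (fun i _ => T0 (x i) (y n)) Hf.
by exists i.
Qed.

Lemma P_to_T m (x y : {ffun 'I_N -> 'I_K}) : 0 < mpow (pca N nv T) m x y ->
  forall n, exists i, 0 < mpow T m (x i) (y n).
Proof.
elim: m x y => [|m IH] x y H n.
  move/mpow0_eq: H => ->; exists n; exact: mpow0_pos.
have [z [h1 h2]] := mpowS_pos_ex pca_ge0 H.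
have [i Hi] := pca_pos_inv n h2.
have [i' Hi'] := IH _ _ h1 i.
exists i'; exact: (mpowS_pos T0 Hi' Hi).
Qed.

Lemma T_to_P m (x y : {ffun 'I_N -> 'I_K}) : (forall n, 0 < mpow T m (x n) (y n)) ->
  0 < mpow (pca N nv T) m x y.
Proof.
elim: m x y => [|m IH] x y H.
  have -> : x = y by apply/ffunP => n; exact: mpow0_eq (H n).
  exact: mpow0_pos.
pose z := [ffun n => odflt (y n)
   [pick k | (0 < mpow T m (x n) k) && (0 < T k (y n))]].
have Hz : forall n, 0 < mpow T m (x n) (z n) /\ 0 < T (z n) (y n).
  move=> n; rewrite /z ffunE; case: pickP => [k /andP [] //|Hn].
  have [k [h1 h2]] := mpowS_pos_ex T0 (H n).
  by move: (Hn k); rewrite h1 h2.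
apply: (mpowS_pos pca_ge0 (k := z)).
  by apply: IH => n; case: (Hz n).
by apply: pca_pos => n; case: (Hz n).
Qed.

End PCA.

Theorem proposition2p9 (R : realFieldType) (N K nv : nat)
  (hN : (1 <= N)%N) (hK : (1 <= K)%N) (T : 'I_K -> 'I_K -> R) :
  row_stochastic T ->
  (irreducible (pca N nv T) /\ aperiodic (pca N nv T) <->
   irreducible T /\ aperiodic T).
Proof.
move=> [Hb _].
have T0 : forall i j, 0 <= T i j by move=> i j; case/andP: (Hb i j).
pose n0 : 'I_N := Ordinal hN.
pose cst (i : 'I_K) : {ffun 'I_N -> 'I_K} := [ffun => i].
split.
  move=> [Hir Hap]; split.
    move=> i j.
    have [m Hm] := Hir (cst i) (cst j).
    have [i' Hi'] := P_to_T hN T0 Hm n0.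
    by exists m; move: Hi'; rewrite !ffunE.
  move=> i d Hd.
  apply: (Hap (cst i)) => m m0 Hm.
  apply: Hd => //.
  have [i' Hi'] := P_to_T hN T0 Hm n0.
  by move: Hi'; rewrite !ffunE.
move=> [Hir Hap].
have [L HL] := primitive T0 Hir Hap.
split.
  move=> x y; exists L; apply: (T_to_P nv hN T0) => n; exact: HL.
move=> x d Hd.
have h1 : (d %| L.+1)%N.
  apply: Hd => //; apply: (T_to_P nv hN T0) => n; apply: HL; lia.
have h2 : (d %| L.+1 + 1)%N.
  apply: Hd => //; apply: (T_to_P nv hN T0) => n; apply: HL; lia.
rewrite dvdn_addr // dvdn1 in h2; exact/eqP.
Qed.
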